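(* For a topologically reasonable pointclass $\Gamma$, if every set in $\Gamma$ is strongly $u$-regular, then every set in $\Gamma$ is $\ell$-regular.
   Context: A set $A\subseteq\omega^\omega$ is dominating if for every $g\in\omega^\omega$ there is $x\in A$ with $g(n)\le x(n)$ for all but finitely many $n$. $A$ is strongly dominating if for every $f\in\omega^\omega$ there is $x\in A$ with $f(x(k-1))<x(k)$ for all but finitely many $k$. A Laver tree is a tree $L\subseteq\omega^{<\omega}$ all of whose nodes extending the stem have infinitely many immediate successors. $A$ is $\ell$-regular if either $A$ contains $[L]$ for some Laver tree $L$, or $A$ is not strongly dominating. A nice set: let $\bar W=\langle w_\sigma,s_\sigma:\sigma\in\omega^{<\omega}\rangle$ be such that $\mathrm{dom}(s_{\langle\rangle})$ and each $w_\sigma$ are finite subsets of $\omega$; $s_{\langle\rangle}:\mathrm{dom}(s_{\langle\rangle})\to\omega$ and for $\sigma\neq\langle\rangle$, $s_\sigma:w_{\sigma{\restriction}(|\sigma|-1)}\to\omega$; for every $f\in\omega^\omega$, $\omega=\mathrm{dom}(s_{\langle\rangle})\cup\bigcup_n w_{f{\restriction}n}$ with the union pairwise disjoint; and $s_\sigma(i)>\sigma(|\sigma|-1)$ for all $\sigma\ne\langle\rangle$ and $i\in w_{\sigma{\restriction}(|\sigma|-1)}$. Then $C(\bar W)=\{\bigcup_n s_{f{\restriction}n}: f\in\omega^\omega\}$ is called a nice set. $A$ is strongly $u$-regular if either $A$ contains a nice set or $A$ is not dominating. A pointclass $\Gamma$ is topologically reasonable if it is closed under continuous preimages and $A\cap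 Q\in\Gamma$ whenever $A\in\Gamma$ and $Q$ is closed. *)

(* Defs.v *)
From Stdlib Require Import List Arith.
Import ListNotations.

Definition baire := nat -> nat.
Definition pointset := baire -> Prop.
Definition pointclass := pointset -> Prop.

Definition restr (f : baire) (n : nat) : list nat := map f (seq 0 n).

Definition baire_continuous (F : baire -> baire) : Prop :=
  forall (x : baire) (n : nat), exists m : nat,
    forall y : baire, restr y m = restr x m -> restr (F y) n = restr (F x) n.

Definition baire_closed (Q : pointset) : Prop :=
  forall x : baire, ~ Q x -> exists n : nat,
    forall y : baire, restr y n = restr x n -> ~ Q y.

Definition topologically_reasonable (G : pointclass) : Prop :=
  (forall (A : pointset) (F : baire -> baire),
      G A -> baire_continuous F -> G (fun x => A (F x))) /\
  (forall A Q : pointset, G A -> baire_closed Q -> G (fun x => A x /\ Q x)).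

Definition dominating (A : pointset) : Prop :=
  forall g : baire, exists x : baire, A x /\
    exists N : nat, forall n, N <= n -> g n <= x n.

(* f(x(k-1)) < x(k) for all but finitely many k (written with k := k'+1) *)
Definition strongly_dominating (A : pointset) : Prop :=
  forall f : baire, exists x : baire, A x /\
    exists N : nat, forall k, N <= k -> f (x k) < x (S k).

Definition is_prefix (s t : list nat) : Prop := exists u, t = s ++ u.

Definition is_tree (L : list nat -> Prop) : Prop :=
  forall s t, L t -> is_prefix s t -> L s.

Definition laver_tree (L : list nat -> Prop) : Prop :=
  is_tree L /\
  exists stem : list nat, L stem /\
    (forall t, L t -> is_prefix t stem \/ is_prefix stem t) /\
    (forall t, L t -> is_prefix stem t ->
       forall N : nat, exists n : nat, N <= n /\ L (t ++ [n])).

Definition body (L : list nat -> Prop) : pointset :=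
  fun x => forall n, L (restr x n).

Definition l_regular (A : pointset) : Prop :=
  (exists L, laver_tree L /\ forall x, body L x -> A x)
  \/ ~ strongly_dominating A.

(* Data: dom0 = dom(s_<>), w sigma = w_sigma, s sigma = s_sigma
   (a function on nat whose values are only relevant on its domain, which is
   dom0 for sigma = <> and w (sigma restricted to |sigma|-1) otherwise). *)
Definition finite_set (P : nat -> Prop) : Prop :=
  exists N, forall i, P i -> i < N.

Definition nice_data (dom0 : nat -> Prop) (w : list nat -> nat -> Prop)
    (s : list nat -> nat -> nat) : Prop :=
  finite_set dom0 /\
  (forall sigma, finite_set (w sigma)) /\
  (forall f : baire,
     (forall i, dom0 i \/ exists n, w (restr f n) i) /\
     (forall i n, ~ (dom0 i /\ w (restr f n) i)) /\
     (forall i n m, w (restr f n) i -> w (restr f m) i -> n = m)) /\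
  (forall sigma, sigma <> [] ->
     forall i, w (removelast sigma) i -> last sigma 0 < s sigma i).

Definition nice_set (dom0 : nat -> Prop) (w : list nat -> nat -> Prop)
    (s : list nat -> nat -> nat) : pointset :=
  fun x => exists f : baire, forall i,
    (dom0 i -> x i = s [] i) /\
    (forall n, w (restr f n) i -> x i = s (restr f (S n)) i).

Definition strongly_u_regular (A : pointset) : Prop :=
  (exists dom0 w s, nice_data dom0 w s /\ forall x, nice_set dom0 w s x -> A x)
  \/ ~ dominating A.

(* Main.v *)
Require Import Defs.
From Stdlib Require Import List Arith Lia Cantor FunctionalExtensionality ClassicalEpsilon.
Import ListNotations.

Lemma restr_length f n : length (restr f n) = n.
Proof. unfold restr. now rewrite length_map, length_seq. Qed.

Lemma nth_restr f n i d : i < n -> nth i (restr f n) d = f i.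
Proof.
  intros H. unfold restr. rewrite nth_indep with (d' := f 0) by (rewrite length_map, length_seq; lia).
  rewrite map_nth, seq_nth by lia. reflexivity.
Qed.

Lemma restr_ext f g n : (forall i, i < n -> f i = g i) -> restr f n = restr g n.
Proof.
  intros H. unfold restr. apply map_ext_in. intros a Ha. apply in_seq in Ha. apply H. lia.
Qed.

Lemma restr_pt f g n i : restr f n = restr g n -> i < n -> f i = g i.
Proof.
  intros H Hi. rewrite <- (nth_restr f n i 0 Hi), <- (nth_restr g n i 0 Hi). now rewrite H.
Qed.

Lemma restr_S f n : restr f (S n) = restr f n ++ [f n].
Proof. unfold restr. now rewrite seq_S, map_app. Qed.

Lemma restr_add f n m : restr f (n + m) = restr f n ++ map f (seq n m).
Proof. unfold restr. now rewrite seq_app, map_app. Qed.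

Fixpoint Mx (h : nat -> nat) (n : nat) : nat :=
  match n with 0 => h 0 | S n => max (Mx h n) (h (S n)) end.

Lemma Mx_ge h n j : j <= n -> h j <= Mx h n.
Proof.
  induction n; intros H; simpl.
  - assert (j = 0) by lia. subst. lia.
  - destruct (Nat.eq_dec j (S n)). subst; lia. specialize (IHn ltac:(lia)). lia.
Qed.

Definition pr (k v : nat) : nat := Cantor.to_nat (k, v).

Lemma pr_ge k v : v <= pr k v /\ k <= pr k v.
Proof. unfold pr. pose proof (to_nat_non_decreasing k v). lia. Qed.

Lemma pr_inj k v k' v' : pr k v = pr k' v' -> k = k' /\ v = v'.
Proof.
  unfold pr. intros H. assert (E := cancel_of_to (k, v)). rewrite H, cancel_of_to in E.
  now inversion E.
Qed.

Fixpoint xs (y : baire) (k : nat) : nat :=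
  match k with 0 => y 0 | S k => y (S (pr k (xs y k))) end.

Definition pos (y : baire) (k : nat) : nat :=
  match k with 0 => 0 | S k => S (pr k (xs y k)) end.

Lemma xs_pos y k : xs y k = y (pos y k).
Proof. destruct k; reflexivity. Qed.

Lemma xs_continuous : baire_continuous xs.
Proof.
  intros x n. exists (S (Mx (pos x) n)). intros y Hy.
  assert (Hk : forall k, k <= n -> xs y k = xs x k).
  { induction k; intros Hk.
    - simpl. apply (restr_pt y x _ 0 Hy). lia.
    - simpl. rewrite IHk by lia. apply (restr_pt y x _ _ Hy).
      pose proof (Mx_ge (pos x) n (S k) Hk). simpl in H. lia. }
  apply restr_ext. intros i Hi. apply Hk. lia.
Qed.

Lemma growth (x : baire) N : (forall k, N <= k -> 2 * x k + 1 < x (S k)) ->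
  forall k, 3 * N <= k -> k <= x k.
Proof.
  intros H.
  assert (H1 : forall j, j <= x (N + j)).
  { induction j. lia. specialize (H (N + j) ltac:(lia)). rewrite Nat.add_succ_r. lia. }
  assert (H2 : forall j, 2 * j <= x (N + j) + N).
  { induction j. lia. pose proof (H1 j). specialize (H (N + j) ltac:(lia)).
    rewrite Nat.add_succ_r. lia. }
  intros k Hk. replace k with (N + (k - N)) by lia. pose proof (H2 (k - N)). lia.
Qed.

Lemma sd_dom (A : pointset) : strongly_dominating A -> dominating (fun y => A (xs y)).
Proof.
  intros HA g.
  destruct (HA (fun v => Mx (fun j => g (S (pr j v))) v + 2 * v + 1)) as [x [Ax [N HN]]].
  set (y := fun i => match i with 0 => x 0 | S q =>
             let (k, v) := Cantor.of_nat q in if v =? x k then x (S k) else g i end).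
  assert (Hxy : forall k, xs y k = x k).
  { induction k. reflexivity. simpl. rewrite IHk. unfold y. unfold pr.
    rewrite cancel_of_to, Nat.eqb_refl. reflexivity. }
  exists y. split.
  { replace (xs y) with x. exact Ax. apply functional_extensionality. intros k. now rewrite Hxy. }
  assert (Hg : forall k, N <= k -> 2 * x k + 1 < x (S k)).
  { intros k Hk. specialize (HN k Hk). cbv beta in HN. lia. }
  pose proof (growth x N Hg) as Gr.
  exists (S (Mx (fun k => S (pr k (x k))) (3 * N))). intros n Hn.
  destruct n as [|q]. lia.
  unfold y. destruct (Cantor.of_nat q) as [k v] eqn:E.
  destruct (Nat.eqb_spec v (x k)) as [Ev|Ev]; [|lia].
  assert (Eq : q = pr k v).
  { unfold pr. rewrite <- E. now rewrite cancel_to_of. }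
  subst v q.
  destruct (le_lt_dec (3 * N) k) as [Hk|Hk].
  - specialize (Gr k Hk). specialize (HN k ltac:(lia)). cbv beta in HN.
    pose proof (Mx_ge (fun j => g (S (pr j (x k)))) (x k) k Gr). simpl in H. lia.
  - pose proof (Mx_ge (fun k => S (pr k (x k))) (3 * N) k ltac:(lia)). cbv beta in H. lia.
Qed.

Section Nice.
Variable A : pointset.
Variables (dom0 : nat -> Prop) (w : list nat -> nat -> Prop) (s : list nat -> nat -> nat).
Hypothesis ND : nice_data dom0 w s.
Hypothesis HC : forall y, nice_set dom0 w s y -> A (xs y).

Definition ext0 (sg : list nat) (i : nat) : nat := nth i sg 0.
Definition Dset (sg : list nat) (p : nat) : Prop :=
  dom0 p \/ exists j, j < length sg /\ w (restr (ext0 sg) j) p.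
Definition NY (f y : baire) : Prop := forall i,
  (dom0 i -> y i = s [] i) /\ (forall n, w (restr f n) i -> y i = s (restr f (S n)) i).
Definition extends (f : baire) (sg : list nat) : Prop :=
  forall i, i < length sg -> f i = nth i sg 0.
Definition pref (a b : list nat) : Prop :=
  length a <= length b /\ forall i, i < length a -> nth i a 0 = nth i b 0.

Lemma cov f i : ~ dom0 i -> exists n, w (restr f n) i.
Proof. destruct ND as [_ [_ [H _]]]. destruct (H f) as [H1 _]. destruct (H1 i); tauto. Qed.
Lemma disj f i n : dom0 i -> w (restr f n) i -> False.
Proof. destruct ND as [_ [_ [H _]]]. destruct (H f) as [_ [H2 _]]. intros; eapply H2; eauto. Qed.
Lemma uniq f i n m : w (restr f n) i -> w (restr f m) i -> n = m.
Proof. destruct ND as [_ [_ [H _]]]. destruct (H f) as [_ [_ H3]]. eauto. Qed.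
Lemma slast t a p : w t p -> a < s (t ++ [a]) p.
Proof.
  destruct ND as [_ [_ [_ H]]]. intros Hw.
  assert (E1 : removelast (t ++ [a]) = t) by apply removelast_last.
  assert (E2 : last (t ++ [a]) 0 = a) by apply last_last.
  rewrite <- E2 at 1. apply H. destruct t; discriminate. now rewrite E1.
Qed.

Lemma nice_y f : exists y, NY f y.
Proof.
  assert (H : forall i, exists v, (dom0 i -> v = s [] i) /\
             (forall n, w (restr f n) i -> v = s (restr f (S n)) i)).
  { intros i. destruct (classic (dom0 i)) as [Hd|Hd].
    - exists (s [] i). split. auto. intros n Hn. exfalso. eapply disj; eauto.
    - destruct (cov f i Hd) as [n Hn]. exists (s (restr f (S n)) i). split. tauto.
      intros m Hm. now rewrite (uniq f i n m Hn Hm). }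
  exists (fun i => proj1_sig (constructive_indefinite_description _ (H i))).
  intros i. exact (proj2_sig (constructive_indefinite_description _ (H i))).
Qed.

Lemma ext_restr f sg j : extends f sg -> j <= length sg -> restr f j = restr (ext0 sg) j.
Proof. intros H Hj. apply restr_ext. intros i Hi. apply H. lia. Qed.

Definition FV sg p v : Prop := (dom0 p -> v = s [] p) /\
  (forall j, j < length sg -> w (restr (ext0 sg) j) p -> v = s (restr (ext0 sg) (S j)) p).
Definition fv sg p : nat := epsilon (inhabits 0) (FV sg p).

Lemma fv_spec sg p : Dset sg p -> FV sg p (fv sg p).
Proof.
  intros HD. unfold fv. apply epsilon_spec. destruct HD as [Hd|[j [Hj Hw]]].
  - exists (s [] p). split. auto. intros j _ Hw. exfalso. eapply disj; eauto.
  - exists (s (restr (ext0 sg) (S j)) p). split.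
    + intros Hd. exfalso. eapply disj; eauto.
    + intros j' _ Hw'. now rewrite (uniq _ _ _ _ Hw Hw').
Qed.

Definition tn sg p : nat := epsilon (inhabits 0) (fun n => w (restr (ext0 sg) n) p).

Lemma tn_spec sg p : ~ Dset sg p ->
  w (restr (ext0 sg) (tn sg p)) p /\ length sg <= tn sg p.
Proof.
  intros HD. assert (Hd : ~ dom0 p) by (intro; apply HD; now left).
  assert (H : w (restr (ext0 sg) (tn sg p)) p).
  { unfold tn. apply epsilon_spec. apply cov; auto. }
  split. auto. destruct (le_lt_dec (length sg) (tn sg p)). auto.
  exfalso. apply HD. right. eauto.
Qed.

Lemma bound_ex (h : nat -> list nat) n : exists B, forall q,
  (dom0 q \/ exists j, j <= n /\ w (h j) q) -> q < B.
Proof.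
  destruct ND as [[N0 HN0] [Hw _]].
  induction n.
  - destruct (Hw (h 0)) as [M HM]. exists (N0 + M). intros q [Hq|[j [Hj Hq]]].
    + specialize (HN0 q Hq). lia.
    + assert (j = 0) by lia. subst. specialize (HM q Hq). lia.
  - destruct IHn as [B HB]. destruct (Hw (h (S n))) as [M HM]. exists (B + M).
    intros q [Hq|[j [Hj Hq]]].
    + specialize (HB q (or_introl Hq)). lia.
    + destruct (Nat.eq_dec j (S n)). subst. specialize (HM q Hq). lia.
      assert (q < B) by (apply HB; right; exists j; split; [lia|auto]). lia.
Qed.

Definition Bd sg n : nat := epsilon (inhabits 0) (fun B => forall q,
  (dom0 q \/ exists j, j <= n /\ w (restr (ext0 sg) j) q) -> q < B).

Lemma Bd_spec sg n q : (dom0 q \/ exists j, j <= n /\ w (restr (ext0 sg) j) q) -> q < Bd sg n.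
Proof. revert q. unfold Bd. apply epsilon_spec. apply bound_ex. Qed.

Fixpoint aseq (t : list nat) (p B m : nat) : nat :=
  match m with 0 => B | S m => s (t ++ [aseq t p B m]) p end.
Definition vseq t p B m : nat := s (t ++ [aseq t p B m]) p.

Lemma vseq_gt t p B m : w t p -> aseq t p B m < vseq t p B m /\ B + m <= aseq t p B m.
Proof.
  intros Hw. induction m.
  - split. apply slast; auto. simpl; lia.
  - split. apply slast; auto. simpl. fold (vseq t p B m). lia.
Qed.

Lemma vseq_mono t p B m m' : w t p -> m < m' -> vseq t p B m < vseq t p B m'.
Proof.
  intros Hw Hm. induction m'. lia.
  destruct (vseq_gt t p B (S m') Hw) as [H1 _]. simpl in H1. fold (vseq t p B m') in H1.
  destruct (Nat.eq_dec m m'). subst; lia. specialize (IHm' ltac:(lia)). lia.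
Qed.

Lemma vseq_inj t p B m m' : w t p -> vseq t p B m = vseq t p B m' -> m = m'.
Proof.
  intros Hw E. destruct (lt_eq_lt_dec m m') as [[H|H]|H]; auto.
  - pose proof (vseq_mono t p B _ _ Hw H). lia.
  - pose proof (vseq_mono t p B _ _ Hw H). lia.
Qed.


Definition State := (list nat * nat)%type.

Definition step (k : nat) (st : State) (m : nat) : nat * State :=
  let (sg, p) := st in
  if excluded_middle_informative (Dset sg p) then
    let v := fv sg p in (v, (sg, S (pr k v)))
  else
    let n := tn sg p in
    let t := restr (ext0 sg) n in
    let B := Bd sg n in
    let v := vseq t p B m in
    (v, (t ++ [aseq t p B m], S (pr k v))).

Fixpoint run (z : baire) (k : nat) : State :=
  match k with 0 => ([], 0) | S k => snd (step k (run z k) (z k)) end.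
Definition Psi (z : baire) (k : nat) : nat := fst (step k (run z k) (z k)).

Definition freeSt (st : State) : Prop := ~ Dset (fst st) (snd st).

Lemma step_forced k sg p m : Dset sg p -> step k (sg, p) m = (fv sg p, (sg, S (pr k (fv sg p)))).
Proof. intros H. unfold step. destruct (excluded_middle_informative _); tauto. Qed.

Lemma step_free k sg p m : ~ Dset sg p -> step k (sg, p) m =
  (vseq (restr (ext0 sg) (tn sg p)) p (Bd sg (tn sg p)) m,
   (restr (ext0 sg) (tn sg p) ++ [aseq (restr (ext0 sg) (tn sg p)) p (Bd sg (tn sg p)) m],
    S (pr k (vseq (restr (ext0 sg) (tn sg p)) p (Bd sg (tn sg p)) m)))).
Proof. intros H. unfold step. destruct (excluded_middle_informative _); tauto. Qed.

Lemma nth_ext0_app t a i : i < length t -> nth i (t ++ [a]) 0 = nth i t 0.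
Proof. intros; now apply app_nth1. Qed.

Lemma free_step k sg p m : ~ Dset sg p ->
  let st' := snd (step k (sg, p) m) in
  freeSt st' /\ pref sg (fst st') /\ length sg < length (fst st').
Proof.
  intros HD. rewrite step_free by auto. simpl.
  destruct (tn_spec sg p HD) as [Hw Hl].
  set (n := tn sg p) in *. set (t := restr (ext0 sg) n) in *. set (B := Bd sg n).
  assert (Lt : length t = n) by apply restr_length.
  destruct (vseq_gt t p B m Hw) as [G1 G2].
  split; [|split].
  - unfold freeSt. simpl. intros HD'.
    assert (Hq : S (pr k (vseq t p B m)) < B).
    { apply Bd_spec. destruct HD' as [Hd|[j [Hj Hw']]]. now left. right. exists j.
      rewrite length_app, Lt in Hj. simpl in Hj. split. lia.
      replace (restr (ext0 sg) j) with (restr (ext0 (t ++ [aseq t p B m])) j). auto.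
      apply restr_ext. intros i Hi. unfold ext0. rewrite nth_ext0_app by lia.
      unfold t. rewrite nth_restr by lia. reflexivity. }
    pose proof (pr_ge k (vseq t p B m)). lia.
  - split. rewrite length_app, Lt. simpl. lia.
    intros i Hi. rewrite nth_ext0_app by lia. unfold t. rewrite nth_restr by lia. reflexivity.
  - rewrite length_app, Lt. simpl. lia.
Qed.

Lemma pref_refl a : pref a a.
Proof. split; auto. Qed.
Lemma pref_trans a b c : pref a b -> pref b c -> pref a c.
Proof.
  intros [H1 H2] [H3 H4]. split. lia. intros i Hi. rewrite H2 by auto. apply H4. lia.
Qed.

Lemma step_pref k st m : pref (fst st) (fst (snd (step k st m))).
Proof.
  destruct st as [sg p]. destruct (classic (Dset sg p)) as [H|H].
  - rewrite step_forced by auto. apply pref_refl.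
  - apply (free_step k sg p m H).
Qed.

Lemma run_pref z k k' : k <= k' -> pref (fst (run z k)) (fst (run z k')).
Proof.
  induction 1. apply pref_refl. eapply pref_trans. eauto. apply step_pref.
Qed.

Lemma run_local z z' k : (forall j, j < k -> z j = z' j) -> run z k = run z' k.
Proof.
  induction k; intros H. reflexivity. simpl. rewrite IHk by (intros; apply H; lia).
  now rewrite H by lia.
Qed.


Lemma pref_extends f a b : pref a b -> extends f b -> extends f a.
Proof. intros [H1 H2] H i Hi. rewrite H2 by auto. apply H. lia. Qed.

Lemma step_y k sg p m f y : extends f (fst (snd (step k (sg, p) m))) -> NY f y ->
  y p = fst (step k (sg, p) m).
Proof.
  intros He Hy. destruct (classic (Dset sg p)) as [HD|HD].
  - rewrite step_forced in * by auto. simpl in *. destruct (fv_spec sg p HD) as [F1 F2].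
    destruct (Hy p) as [Y1 Y2].
    destruct HD as [Hd|[j [Hj Hw]]]. rewrite Y1, F1; auto.
    rewrite (F2 j Hj Hw). rewrite <- (ext_restr f sg j He) in Hw by lia.
    rewrite (Y2 j Hw). f_equal. apply ext_restr; auto.
  - rewrite step_free in * by auto. simpl in *.
    destruct (tn_spec sg p HD) as [Hw Hl].
    set (n := tn sg p) in *. set (t := restr (ext0 sg) n) in *. set (B := Bd sg n) in *.
    assert (Lt : length t = n) by apply restr_length.
    assert (E1 : restr f n = t).
    { unfold t. apply restr_ext. intros i Hi. rewrite He by (rewrite length_app; simpl; lia).
      rewrite nth_ext0_app by lia. unfold t. rewrite nth_restr by lia. reflexivity. }
    assert (E2 : f n = aseq t p B m).
    { rewrite He by (rewrite length_app; simpl; lia). rewrite app_nth2 by lia.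
      rewrite Lt, Nat.sub_diag. reflexivity. }
    destruct (Hy p) as [_ Y2]. rewrite <- E1 in Hw. rewrite (Y2 n Hw).
    rewrite restr_S, E1, E2. reflexivity.
Qed.

Lemma invariant z k f y : extends f (fst (run z k)) -> NY f y ->
  (forall j, j < k -> xs y j = Psi z j) /\ xs y k = y (snd (run z k)).
Proof.
  revert f y. induction k; intros f y He Hy.
  - split. intros; lia. reflexivity.
  - assert (He' : extends f (fst (run z k))).
    { eapply pref_extends. apply step_pref. exact He. }
    destruct (IHk f y He' Hy) as [I1 I2].
    assert (Hv : y (snd (run z k)) = Psi z k).
    { unfold Psi. destruct (run z k) as [sg p] eqn:E. simpl in *. eapply step_y. 2: eauto.
      simpl in He. rewrite E in He. exact He. }
    split.
    + intros j Hj. destruct (Nat.eq_dec j k). subst. congruence. apply I1. lia.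
    + simpl. rewrite I2, Hv. unfold Psi. destruct (run z k) as [sg p] eqn:E.
      destruct (classic (Dset sg p)) as [HD|HD].
      * rewrite step_forced by auto. reflexivity.
      * rewrite step_free by auto. reflexivity.
Qed.

Lemma key z z' n : (forall j, j < n -> Psi z j = Psi z' j) -> run z n = run z' n.
Proof.
  induction n; intros H. reflexivity.
  assert (IH : run z n = run z' n) by (apply IHn; intros; apply H; lia).
  specialize (H n ltac:(lia)). unfold Psi in H. simpl. rewrite IH in *.
  destruct (run z' n) as [sg p]. destruct (classic (Dset sg p)) as [HD|HD].
  - rewrite !step_forced by auto. reflexivity.
  - rewrite !step_free in * by auto. simpl in H.
    destruct (tn_spec sg p HD) as [Hw _].
    apply vseq_inj in H; auto. now rewrite H.
Qed.


Definition z0 : baire := fun _ => 0.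

Lemma not_all_forced : ~ (forall k, Dset (fst (run z0 k)) (snd (run z0 k))).
Proof.
  intros H. destruct ND as [[N0 HN0] _].
  assert (R : forall k, fst (run z0 k) = [] /\ k <= snd (run z0 k)).
  { induction k. simpl; auto. cbn [run]. specialize (H k).
    destruct (run z0 k) as [sg p]. cbn [fst snd] in *. destruct IHk as [E Hk]. subst.
    rewrite step_forced by auto. simpl. split; auto.
    pose proof (pr_ge k (fv [] p)). lia. }
  specialize (H N0). destruct (R N0) as [E Hk]. rewrite E in H.
  destruct H as [Hd|[j [Hj _]]]. specialize (HN0 _ Hd). lia. simpl in Hj; lia.
Qed.

Lemma Psi_local z z' k : (forall j, j <= k -> z j = z' j) -> Psi z k = Psi z' k.
Proof.
  intros H. unfold Psi. rewrite (run_local z z' k) by (intros; apply H; lia).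
  now rewrite H.
Qed.

Lemma restr_char t g : (forall i, i < length t -> nth i t 0 = g i) -> t = restr g (length t).
Proof.
  intros H. apply nth_ext with 0 0. now rewrite restr_length.
  intros i Hi. rewrite nth_restr by auto. auto.
Qed.

Theorem laver : exists L, laver_tree L /\ forall x, body L x -> A x.
Proof.
  assert (HK : exists K, freeSt (run z0 K) /\ forall j, j < K -> Dset (fst (run z0 j)) (snd (run z0 j))).
  { destruct (not_all_ex_not _ _ not_all_forced) as [k0 Hk0].
    assert (G : forall n, (forall j, j <= n -> Dset (fst (run z0 j)) (snd (run z0 j))) \/
       exists K, freeSt (run z0 K) /\ forall j, j < K -> Dset (fst (run z0 j)) (snd (run z0 j))).
    { induction n.
      - destruct (classic (Dset (fst (run z0 0)) (snd (run z0 0)))).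
        left; intros j Hj; replace j with 0 by lia; auto.
        right; exists 0; split; [exact H|intros; lia].
      - destruct IHn as [IH|IH]; [|now right].
        destruct (classic (Dset (fst (run z0 (S n))) (snd (run z0 (S n))))).
        left; intros j Hj; destruct (Nat.eq_dec j (S n)); [subst; auto|apply IH; lia].
        right; exists (S n); split; [exact H|intros; apply IH; lia]. }
    destruct (G k0) as [G1|G1]; auto. exfalso. apply Hk0, G1. lia. }
  destruct HK as [K [HK1 HK2]].
  assert (S1 : forall z k, k <= K -> run z k = run z0 k).
  { intros z. induction k; intros Hk. reflexivity. simpl. rewrite IHk by lia.
    specialize (HK2 k ltac:(lia)). destruct (run z0 k) as [sg p]. simpl in HK2.
    rewrite !step_forced by auto. reflexivity. }
  assert (S2 : forall z j, j < K -> Psi z j = Psi z0 j).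
  { intros z j Hj. unfold Psi. rewrite S1 by lia. specialize (HK2 j Hj).
    destruct (run z0 j) as [sg p]. simpl in HK2. rewrite !step_forced by auto. reflexivity. }
  assert (S3 : forall z k, K <= k -> freeSt (run z k)).
  { intros z. induction 1. rewrite S1 by lia. auto. simpl.
    destruct (run z m) as [sg p]. apply (free_step m sg p (z m) IHle). }
  assert (S5 : forall z j, j <= length (fst (run z (K + j)))).
  { intros z. induction j. lia. rewrite Nat.add_succ_r. simpl.
    specialize (S3 z (K + j) ltac:(lia)). destruct (run z (K + j)) as [sg p].
    destruct (free_step (K + j) sg p (z (K + j)) S3) as [_ [_ H]]. simpl in *. lia. }
  set (L := fun t : list nat => exists z, t = restr (Psi z) (length t)).
  exists L. split.
  - split.
    { intros a t [z Hz] [u Hu]. exists z. apply restr_char. intros i Hi.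
      subst t. rewrite <- (app_nth1 a u 0 Hi), Hz. rewrite nth_restr. reflexivity.
      rewrite length_app; lia. }
    exists (restr (Psi z0) K). split; [|split].
    + exists z0. now rewrite restr_length.
    + intros t [z Hz]. destruct (le_lt_dec (length t) K).
      * left. exists (map (Psi z0) (seq (length t) (K - length t))).
        replace K with (length t + (K - length t)) at 1 by lia. rewrite restr_add. f_equal.
        transitivity (restr (Psi z) (length t)); [|symmetry; exact Hz].
        apply restr_ext. intros i Hi. symmetry. apply S2. lia.
      * right. exists (map (Psi z) (seq K (length t - K))). rewrite Hz at 1.
        replace (length t) with (K + (length t - K)) at 1 by lia. rewrite restr_add. f_equal.
        apply restr_ext. intros i Hi. apply S2. lia.
    + intros t [z Hz] [u Hu] N. set (k := length t).
      assert (Hk : K <= k). { unfold k. rewrite Hu, length_app, restr_length. lia. }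
      set (z' := fun j => if j <? k then z j else N).
      assert (Hr : run z' k = run z k).
      { apply run_local. intros j Hj. unfold z'. now rewrite (proj2 (Nat.ltb_lt j k) Hj). }
      exists (Psi z' k). split.
      * unfold Psi. rewrite Hr. specialize (S3 z k Hk). destruct (run z k) as [sg p].
        rewrite step_free by auto. simpl. unfold z'. rewrite Nat.ltb_irrefl.
        destruct (tn_spec sg p S3) as [Hw _].
        pose proof (vseq_gt (restr (ext0 sg) (tn sg p)) p (Bd sg (tn sg p)) N Hw). lia.
      * exists z'. rewrite length_app. simpl. rewrite Nat.add_1_r. fold k.
        rewrite restr_S. f_equal. rewrite Hz. fold k. apply restr_ext. intros i Hi.
        apply Psi_local. intros j Hj. unfold z'. now rewrite (proj2 (Nat.ltb_lt j k)) by lia.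
  - intros x Hx.
    assert (Hzs : forall n, exists z, restr x n = restr (Psi z) n).
    { intros n. destruct (Hx n) as [z Hz]. rewrite restr_length in Hz. eauto. }
    destruct (choice _ Hzs) as [zs Hzs'].
    set (z := fun k => zs (S k) k).
    assert (Hz : forall n j, j < n -> Psi z j = x j).
    { induction n; intros j Hj. lia.
      destruct (Nat.eq_dec j n); [subst j|apply IHn; lia].
      assert (E : run z n = run (zs (S n)) n).
      { apply key. intros i Hi. rewrite IHn by auto.
        apply (restr_pt _ _ _ _ (Hzs' (S n))). lia. }
      unfold Psi. rewrite E. replace (z n) with (zs (S n) n) by reflexivity.
      fold (Psi (zs (S n)) n). symmetry. apply (restr_pt _ _ _ _ (Hzs' (S n))). lia. }
    set (f := fun i => nth i (fst (run z (K + S i))) 0).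
    assert (Hf : forall k, extends f (fst (run z k))).
    { intros k i Hi. unfold f. destruct (le_lt_dec k (K + S i)).
      - symmetry. apply (run_pref z _ _ l). auto.
      - apply (run_pref z _ _ (Nat.lt_le_incl _ _ l)). specialize (S5 z (S i)). lia. }
    destruct (nice_y f) as [y Hy].
    assert (Ay : A (xs y)) by (apply HC; exists f; exact Hy).
    replace x with (xs y). auto. apply functional_extensionality. intros j.
    destruct (invariant z (S j) f y (Hf _) Hy) as [I1 _]. rewrite I1 by lia. apply Hz with (S j). lia.
Qed.

End Nice.

Theorem proposition3p7 (G : pointclass) :
  topologically_reasonable G ->
  (forall A : pointset, G A -> strongly_u_regular A) ->
  forall A : pointset, G A -> l_regular A.
Proof.
  intros [HG1 _] HU A HA.
  destruct (classic (strongly_dominating A)) as [SD|NSD]; [left|right; auto].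
  assert (GB : G (fun y => A (xs y))) by (apply HG1; auto; apply xs_continuous).
  destruct (HU _ GB) as [[dom0 [w [s [ND HCs]]]]|NDm].
  - exact (laver A dom0 w s ND HCs).
  - exfalso. apply NDm. apply sd_dom. exact SD.
Qed.
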